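(* Let $f\in\mathcal{F}$, let $A$ be a finite subset of $f^{-1}(E)$ and let $b\in\mathbb{C}$. Then for every $\varepsilon>0$ there exists $g\in\mathcal{F}(f,A)$ such that $d_{\mathcal{F}}(f,g)<\varepsilon$ and $g(b)\in E$.
   Context: $\mathcal{F}$ is a Fréchet space of entire maps containing all complex polynomial maps, whose topology is finer than the topology of local uniform convergence on $\mathbb{C}$; $(\|\cdot\|_j)_{j\ge0}$ is a sequence of seminorms defining its topology and $d_{\mathcal{F}}(f,g)=\sum_{j\ge0}2^{-j}\min\{1,\|f-g\|_j\}$. $E$ is a countable dense subset of $\mathbb{C}$. For $f\in\mathcal{F}$ and $A\subseteq\mathbb{C}$, $\mathcal{F}(f,A)=\{g\in\mathcal{F}: g|_A=f|_A \text{ and } g'|_A=f'|_A\}$. *)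

(* Defs.v *)
From Stdlib Require Import Reals List.
From Coquelicot Require Import Coquelicot.
Open Scope R_scope.

(* Complex polynomial map with coefficient list [a0; a1; ...] (Horner evaluation). *)
Definition peval (l : list C) (z : C) : C :=
  fold_right (fun a acc => Cplus a (Cmult z acc)) (RtoC 0) l.

Definition fsub (f g : C -> C) : C -> C := fun z => Cminus (f z) (g z).
Definition fadd (f g : C -> C) : C -> C := fun z => Cplus (f z) (g z).
Definition fscal (c : C) (f : C -> C) : C -> C := fun z => Cmult c (f z).

Definition entire (f : C -> C) : Prop := forall z : C, ex_derive (K := C_AbsRing) f z.

Definition dF (sn : nat -> (C -> C) -> R) (f g : C -> C) : R :=
  Series (fun j => / 2 ^ j * Rmin 1 (sn j (fsub f g))).

(* A Fréchet space of entire maps containing all polynomial maps, whose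
   topology (given by the sequence of seminorms sn) is finer than the topology
   of local uniform convergence on C. *)
Record FrechetEntire := {
  Fset : (C -> C) -> Prop;
  sn : nat -> (C -> C) -> R;
  Fset_entire : forall f, Fset f -> entire f;
  Fset_add : forall f g, Fset f -> Fset g -> Fset (fadd f g);
  Fset_scal : forall c f, Fset f -> Fset (fscal c f);
  Fset_poly : forall l, Fset (peval l);
  sn_nonneg : forall j f, Fset f -> 0 <= sn j f;
  sn_triangle : forall j f g, Fset f -> Fset g -> sn j (fadd f g) <= sn j f + sn j g;
  sn_homog : forall j c f, Fset f -> sn j (fscal c f) = Cmod c * sn j f;
  sn_separating : forall f, Fset f -> (forall j, sn j f = 0) -> forall z, f z = RtoC 0;
  Fset_complete : forall u : nat -> (C -> C), (forall n, Fset (u n)) ->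
     (forall eps, 0 < eps -> exists N, forall m n, (N <= m)%nat -> (N <= n)%nat ->
         dF sn (u m) (u n) < eps) ->
     exists f, Fset f /\ is_lim_seq (fun n => dF sn (u n) f) 0;
  Fset_finer : forall f, Fset f -> forall r eps, 0 < r -> 0 < eps ->
     exists delta, 0 < delta /\ forall g, Fset g -> dF sn f g < delta ->
        forall z, Cmod z <= r -> Cmod (Cminus (g z) (f z)) < eps
}.

Definition countable_set (E : C -> Prop) : Prop :=
  exists e : nat -> C, forall z, E z <-> exists n, e n = z.
Definition dense_set (E : C -> Prop) : Prop :=
  forall z eps, 0 < eps -> exists w, E w /\ Cmod (Cminus w z) < eps.

Definition finite_set (A : C -> Prop) : Prop :=
  exists l : list C, forall z, A z <-> In z l.

Definition FfA (F : FrechetEntire) (f : C -> C) (A : C -> Prop) (g : C -> C) : Prop :=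
  Fset F g /\
  (forall a, A a -> g a = f a) /\
  (forall a, A a -> exists l : C,
       is_derive (K := C_AbsRing) g a l /\ is_derive (K := C_AbsRing) f a l).

(* Main.v *)
Require Import Defs.
From Stdlib Require Import Reals List Lra Lia Classical FunctionalExtensionality.
From Coquelicot Require Import Coquelicot.
Open Scope R_scope.

Definition addc (c : C) (l : list C) : list C :=
  match l with nil => c :: nil | x :: r => Cplus c x :: r end.

Fixpoint mul_lin (a : C) (l : list C) : list C :=
  match l with
  | nil => nil
  | c :: l' => Cmult (Copp a) c :: addc c (mul_lin a l')
  end.

Lemma peval_addc c l z : peval (addc c l) z = Cplus c (peval l z).
Proof. destruct l; simpl; ring. Qed.

Lemma peval_mul_lin a l z : peval (mul_lin a l) z = Cmult (Cminus z a) (peval l z).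
Proof.
  induction l as [|c l IH]; simpl. ring.
  rewrite peval_addc, IH. ring.
Qed.

Lemma conv (f : C -> C) x l : @is_derive C_AbsRing (AbsRing_NormedModule C_AbsRing) f x l -> @is_derive C_AbsRing C_NormedModule f x l.
Proof. intros [H1 H2]. split. destruct H1 as [a b [M [HM Hb]]]. split; try assumption. exists M. split; try assumption.
 exact H2. Qed.
Lemma conv2 (f : C -> C) x l : @is_derive C_AbsRing C_NormedModule f x l -> @is_derive C_AbsRing (AbsRing_NormedModule C_AbsRing) f x l.
Proof. intros [H1 H2]. split. destruct H1 as [a b [M [HM Hb]]]. split; try assumption. exists M. split; try assumption.
 exact H2. Qed.

Lemma deriv_sq (Q : C -> C) a x q :
  is_derive (K := C_AbsRing) Q x q ->
  is_derive (K := C_AbsRing) (fun z => Cmult (Cminus z a) (Cmult (Cminus z a) (Q z))) x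
    (Cplus (Cmult (RtoC 2) (Cmult (Cminus x a) (Q x))) (Cmult (Cmult (Cminus x a) (Cminus x a)) q)).
Proof.
  intros HQ. apply conv2 in HQ. apply conv.
  assert (H1 : is_derive (K := C_AbsRing) (V := AbsRing_NormedModule C_AbsRing) (fun z : C => Cminus z a) x one).
  { assert (H := is_derive_minus (K := C_AbsRing) (V := AbsRing_NormedModule C_AbsRing) (fun t => t) (fun _ => a) x one zero
       (is_derive_id x) (is_derive_const (V := AbsRing_NormedModule C_AbsRing) a x)).
    match type of H with is_derive _ _ ?l => replace l with (one : C_AbsRing) in H end.
    2:{ cbv -[Rplus Rmult Ropp Rminus IZR]. apply injective_projections; simpl; ring. }
    cbv beta in H.
    eapply is_derive_ext; [|exact H]. intro t. reflexivity. }
  assert (H2 := is_derive_mult (K := C_AbsRing) _ _ x _ _ H1 HQ Cmult_comm).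
  assert (H3 := is_derive_mult (K := C_AbsRing) _ _ x _ _ H1 H2 Cmult_comm).
  simpl in H3.
  match goal with |- is_derive _ _ ?l => match type of H3 with is_derive _ _ ?l' =>
    replace l with l' end end.
  exact H3.
  cbv -[Rplus Rmult Ropp Rminus IZR]. apply injective_projections; simpl; ring.
Qed.

Lemma Cmult_neq0 (u v : C) : u <> RtoC 0 -> v <> RtoC 0 -> Cmult u v <> RtoC 0.
Proof.
  intros Hu Hv H. apply (f_equal Cmod) in H. rewrite Cmod_mult, Cmod_0 in H.
  apply Cmod_gt_0 in Hu. apply Cmod_gt_0 in Hv. nra.
Qed.

Lemma poly_exists (F : FrechetEntire) (b : C) (L : list C) : ~ In b L ->
  exists l, (forall a, In a L -> peval l a = RtoC 0 /\ is_derive (K := C_AbsRing) (peval l) a (RtoC 0))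
    /\ peval l b <> RtoC 0.
Proof.
  induction L as [|a L IH]; intros Hb.
  - exists (RtoC 1 :: nil). split. intros a []. simpl.
    replace (Cplus (RtoC 1) (Cmult b (RtoC 0))) with (RtoC 1) by ring.
    intro H. injection H. lra.
  - destruct IH as [l [Hl Hlb]]. intro H; apply Hb; right; exact H.
    exists (mul_lin a (mul_lin a l)).
    assert (Heq : forall z, peval (mul_lin a (mul_lin a l)) z =
       Cmult (Cminus z a) (Cmult (Cminus z a) (peval l z))).
    { intro z. rewrite !peval_mul_lin. reflexivity. }
    split.
    + intros a' Ha'. rewrite Heq.
      assert (Hd : exists q, is_derive (K := C_AbsRing) (peval l) a' q /\
                 (a' = a \/ (peval l a' = RtoC 0 /\ q = RtoC 0))).
      { destruct Ha' as [Ea|Ha'].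
        - destruct (Fset_entire F _ (Fset_poly F l) a') as [q Hq]. exists q. auto.
        - exists (RtoC 0). destruct (Hl a' Ha') as [H1 H2]. auto. }
      destruct Hd as [q [Hq Hor]].
      assert (HD := deriv_sq _ a a' q Hq).
      split.
      * destruct Hor as [->|[H1 _]]. ring. rewrite H1. ring.
      * eapply is_derive_ext. intro t. symmetry. apply Heq.
        match goal with |- is_derive _ _ ?l => match type of HD with is_derive _ _ ?l' =>
          replace l with l' end end. exact HD.
        destruct Hor as [->|[H1 ->]]. ring. rewrite H1. ring.
    + rewrite Heq. assert (Hba : Cminus b a <> RtoC 0).
      { intro H. apply Hb. left. 
        replace b with (Cplus (Cminus b a) a) by ring. rewrite H. ring. }
      apply Cmult_neq0; auto. apply Cmult_neq0; auto.
Qed.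

Lemma sum_ge (s : nat -> R) (N j : nat) : (forall k, 0 <= s k) -> (j <= N)%nat -> s j <= sum_f_R0 s N.
Proof.
  intros Hs. induction N as [|N IH]; intros Hj.
  - inversion Hj; simpl; lra.
  - simpl. assert (Hsum : forall M, 0 <= sum_f_R0 s M).
    { induction M; simpl. apply Hs. specialize (Hs (S M)); lra. }
    destruct (Nat.eq_dec j (S N)) as [->|Hne].
    + specialize (Hsum N). lra.
    + assert (s j <= sum_f_R0 s N) by (apply IH; lia). specialize (Hs (S N)); lra.
Qed.

Lemma pow_small (N j : nat) : (N <= j)%nat -> (2/3)^j <= (2/3)^N.
Proof.
  intros H. replace j with (N + (j - N))%nat by lia. rewrite pow_add.
  assert (0 <= (2/3)^N) by (apply pow_le; lra).
  assert (0 <= (2/3)^(j-N) <= 1). { split. apply pow_le; lra. clear. induction (j - N)%nat; simpl. lra. assert (0 <= (2/3)^n) by (apply pow_le; lra). nra. }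
  nra.
Qed.

Lemma geom_series (q : R) : 0 <= q < 1 -> ex_series (fun n => q ^ n) /\ Series (fun n => q ^ n) = / (1 - q).
Proof.
  intros Hq. assert (H := is_series_geom q ltac:(rewrite Rabs_pos_eq; lra)).
  split. eexists; exact H. apply is_series_unique; exact H.
Qed.

Lemma dF_small (F : FrechetEntire) (f P : C -> C) (HP : Fset F P) (eps : R) :
  0 < eps -> exists eta, 0 < eta /\ forall c, Cmod c < eta ->
    dF (sn F) f (fadd f (fscal c P)) < eps.
Proof.
  intros Heps.
  destruct (pow_lt_1_zero (2/3) ltac:(rewrite Rabs_pos_eq; lra) (eps/8) ltac:(lra)) as [N HN].
  specialize (HN N (le_n N)). rewrite Rabs_pos_eq in HN by (apply pow_le; lra).
  set (s := fun j => sn F j P).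
  assert (Hs : forall k, 0 <= s k) by (intro k; apply sn_nonneg; exact HP).
  set (S := sum_f_R0 s N).
  assert (HS : 0 <= S) by (apply (Rle_trans _ (s O)); [apply Hs | apply sum_ge; auto; lia]).
  exists (eps / (4 * (S + 1))). split. apply Rdiv_lt_0_compat; lra.
  intros c Hc.
  assert (Hfun : fsub f (fadd f (fscal c P)) = fscal (Copp c) P).
  { apply functional_extensionality. intro z. unfold fsub, fadd, fscal. ring. }
  unfold dF. rewrite Hfun.
  set (t := fun j => / 2 ^ j * Rmin 1 (sn F j (fscal (Copp c) P))).
  set (bnd := fun j => (/2) ^ j * (Cmod c * S) + (3/4)^j * (2/3)^N).
  destruct (geom_series (/2) ltac:(lra)) as [E1 S1].
  destruct (geom_series (3/4) ltac:(lra)) as [E2 S2].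
  assert (Eb : ex_series bnd).
  { apply (ex_series_plus (fun j => (/2) ^ j * (Cmod c * S)) (fun j => (3/4)^j * (2/3)^N)).
    apply ex_series_scal_r; exact E1. apply ex_series_scal_r; exact E2. }
  assert (Hle : forall j, 0 <= t j <= bnd j).
  { intro j. unfold t, bnd. rewrite sn_homog by exact HP. rewrite Cmod_opp.
    fold (s j). assert (H2j : 0 < / 2 ^ j) by (apply Rinv_0_lt_compat, pow_lt; lra).
    assert (Hcj : 0 <= Cmod c * s j) by (apply Rmult_le_pos; [apply Cmod_ge_0 | apply Hs]).
    assert (Hm0 : 0 <= Rmin 1 (Cmod c * s j)) by (apply Rmin_glb; lra).
    assert (H34 : 0 <= (2/3)^N * (3/4)^j) by (apply Rmult_le_pos; apply pow_le; lra).
    rewrite pow_inv. split. nra.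
    destruct (Compare_dec.le_lt_dec j N) as [HjN|HjN].
    - assert (s j <= S) by (apply sum_ge; auto).
      assert (Rmin 1 (Cmod c * s j) <= Cmod c * S).
      { apply (Rle_trans _ _ _ (Rmin_r _ _)). apply Rmult_le_compat_l; auto. apply Cmod_ge_0. }
      nra.
    - assert (Hp := pow_small N j ltac:(lia)).
      assert (E : / 2 ^ j = (2/3)^j * (3/4)^j) by (rewrite <- pow_inv, <- Rpow_mult_distr; f_equal; lra).
      assert (0 <= (3/4)^j) by (apply pow_le; lra).
      assert (Rmin 1 (Cmod c * s j) <= 1) by apply Rmin_l.
      assert ((2/3)^j * (3/4)^j <= (2/3)^N * (3/4)^j) by nra.
      assert (0 <= / 2 ^ j * (Cmod c * S)) by (apply Rmult_le_pos; [lra|apply Rmult_le_pos; [apply Cmod_ge_0|lra]]).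
      nra. }
  apply (Rle_lt_trans _ (Series bnd)). apply Series_le; auto.
  unfold bnd. rewrite Series_plus.
  2:{ apply ex_series_scal_r; exact E1. }
  2:{ apply ex_series_scal_r; exact E2. }
  rewrite (Series_scal_r (Cmod c * S) (fun n => (/2)^n)), (Series_scal_r ((2/3)^N) (fun n => (3/4)^n)), S1, S2.
  replace (/ (1 - /2)) with 2 by field. replace (/ (1 - 3/4)) with 4 by field.
  assert (Cmod c * S <= eps / (4 * (S+1)) * S) by (apply Rmult_le_compat_r; lra).
  assert (eps / (4 * (S + 1)) * S < eps / 4).
  { unfold Rdiv. rewrite Rinv_mult. assert (0 < / (S+1)) by (apply Rinv_0_lt_compat; lra).
    assert (S * / (S+1) < 1). { apply (Rmult_lt_reg_r (S+1)); [lra|]. rewrite Rmult_assoc, Rinv_l by lra. lra. }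
    nra. }
  lra.
Qed.

Theorem lemma2p3 (F : FrechetEntire) (E : C -> Prop)
  (HEc : countable_set E) (HEd : dense_set E)
  (f : C -> C) (Hf : Fset F f)
  (A : C -> Prop) (HAfin : finite_set A) (HAE : forall a, A a -> E (f a))
  (b : C) :
  forall eps, 0 < eps ->
    exists g, FfA F f A g /\ dF (sn F) f g < eps /\ E (g b).
Proof.
  intros eps Heps.
  destruct HAfin as [L HL].
  destruct (classic (In b L)) as [HbL|HbL].
  - exists f. split; [|split].
    + split; [exact Hf|split]. intros; reflexivity.
      intros a _. destruct (Fset_entire F f Hf a) as [l Hl]. exists l. auto.
    + assert (Hfun : fsub f f = fscal (RtoC 0) f).
      { apply functional_extensionality. intro z. unfold fsub, fscal. ring. }
      unfold dF. rewrite Hfun.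
      rewrite (Series_ext _ (fun j => 0 * (/ 2 ^ j))).
      rewrite Series_scal_l. lra.
      intro j. rewrite sn_homog by exact Hf. rewrite Cmod_0, Rmult_0_l.
      unfold Rmin. destruct (Rle_dec 1 0); [lra|]. ring.
    + apply HAE, HL, HbL.
  - destruct (poly_exists F b L HbL) as [l [Hl Hlb]].
    set (P := peval l).
    assert (HP : Fset F P) by apply Fset_poly.
    destruct (dF_small F f P HP eps Heps) as [eta [Heta Hsmall]].
    assert (Hpb : 0 < Cmod (P b)) by (apply Cmod_gt_0; exact Hlb).
    destruct (HEd (f b) (Cmod (P b) * eta) ltac:(nra)) as [w [Hw Hwd]].
    set (c := Cdiv (Cminus w (f b)) (P b)).
    exists (fadd f (fscal c P)). split; [|split].
    + split; [|split].
      * apply Fset_add; [exact Hf|apply Fset_scal; exact HP].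
      * intros a Ha. unfold fadd, fscal. destruct (Hl a (proj1 (HL a) Ha)) as [H0 _].
        unfold P. rewrite H0. ring.
      * intros a Ha. destruct (Hl a (proj1 (HL a) Ha)) as [_ Hd].
        destruct (Fset_entire F f Hf a) as [lf Hlf]. exists lf. split; [|exact Hlf].
        apply conv2 in Hd. apply conv2 in Hlf.
        assert (Hc := is_derive_mult (K := C_AbsRing) (fun _ => c) P a _ _
                 (is_derive_const (V := AbsRing_NormedModule C_AbsRing) c a) Hd Cmult_comm).
        assert (H := is_derive_plus (K := C_AbsRing) _ _ a _ _ Hlf Hc).
        apply conv.
        match type of H with is_derive _ _ ?l' => replace lf with l' end.
        exact H.
        clearbody P. destruct lf as [l1 l2]. destruct (P a) as [p1 p2]. destruct c as [c1 c2].
        cbv -[Rplus Rmult Ropp Rminus IZR]. apply injective_projections; simpl; ring.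
    + apply Hsmall. unfold c. rewrite Cmod_div by exact Hlb.
      apply (Rmult_lt_reg_r (Cmod (P b))); [exact Hpb|].
      unfold Rdiv. rewrite Rmult_assoc, Rinv_l by lra. nra.
    + unfold fadd, fscal, c. replace (Cplus (f b) (Cmult (Cdiv (Cminus w (f b)) (P b)) (P b))) with w.
      exact Hw. field. exact Hlb.
Qed.
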